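(* Let $E=(C,V)$ be an approval election. Then $\mathrm{cntr\text{-}agr}(E)=1$ if and only if $E$ is an identity election, and $\mathrm{cntr\text{-}agr}(E)=0$ if and only if either $\mathrm{cen}(E)$ contains a vote approving all candidates or $\mathrm{cen}(E)$ contains a vote disapproving all candidates.
   Context: An (approval) election is a pair $E=(C,V)$ with candidate set $C=\{c_1,\dots,c_m\}$ and a collection of voters $V=(v_1,\dots,v_n)$; each vote is a binary vector in $\{0,1\}^m$ ($v_i[j]=1$ iff voter $v_i$ approves $c_j$). $A(v)$ is the set of candidates approved by vote $v$ and $A(c)$ the set of voters approving candidate $c$. An identity election is one in which all votes are identical. The Hamming distance between votes is $\mathrm{ham}(u,v)=\sum_{j=1}^m|u[j]-v[j]|$. Let $\mathrm{avl}(E)=\frac{1}{|V|}\sum_{v\in V}|A(v)|$ and $\mathrm{rev\text{-}avl}(E)=\frac{1}{|V|}\sum_{v\in V}(|C|-|A(v)|)$ (the average number of disapproved candidates). A vote $u\in\{0,1\}^m$ is central for $E$ if for each candidate $c_j$, $u$ agrees regarding $c_j$ (i.e. $u[j]=v_i[j]$) with at least half of the voters; $\mathrm{cen}(E)$ denotes the set of all central votes. Central Agreement is $\mathrm{cntr\text{-}agr}(E)=1-\frac{\sum_{v_i\in V}\mathrm{ham}(v_i,u)}{|V|\cdot\min(\mathrm{avl}(E),\mathrm{rev\text{-}avl}(E))}$ for an arbitrary $u\in\mathrm{cen}(E)$ (the value does not depend on the choice of $u$). *)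

(* Defs.v *)
From mathcomp Require Import all_boot all_order all_algebra.
Set Implicit Arguments. Unset Strict Implicit. Unset Printing Implicit Defensive.
Import Order.TTheory GRing.Theory Num.Theory.
Local Open Scope ring_scope.

(* Candidates c_1..c_m are 'I_m, voters v_1..v_n are 'I_n.
   A vote is a binary vector 'I_m -> bool (true = approves). *)
Definition vote (m : nat) := 'I_m -> bool.
Definition election (m n : nat) := 'I_n -> vote m.

Section Defs.
Variables (m n : nat).

Definition appr_set (v : vote m) : {set 'I_m} := [set j | v j].
Definition approvers (E : election m n) (j : 'I_m) : {set 'I_n} :=
  [set i | E i j].

Definition ham (u v : vote m) : nat := #|[set j | u j != v j]|.

Definition identity_election (E : election m n) : Prop :=
  forall i i' : 'I_n, forall j : 'I_m, E i j = E i' j.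

Variable R : realFieldType.

Definition avl (E : election m n) : R :=
  (\sum_(i < n) #|appr_set (E i)|)%:R / n%:R.
Definition rev_avl (E : election m n) : R :=
  (\sum_(i < n) (m - #|appr_set (E i)|)%N)%:R / n%:R.

Definition central (E : election m n) (u : vote m) : Prop :=
  forall j : 'I_m, (n <= 2 * #|[set i | u j == E i j]|)%N.

Definition cntr_agr_wrt (E : election m n) (u : vote m) : R :=
  1 - (\sum_(i < n) ham (E i) u)%:R / (n%:R * Num.min (avl E) (rev_avl E)).

Definition majority_vote (E : election m n) : vote m :=
  fun j => (n <= 2 * #|approvers E j|)%N.

(* cntr-agr(E), evaluated at the (central) majority vote; the paper notes
   the value does not depend on the choice of central vote. *)
Definition cntr_agr (E : election m n) : R := cntr_agr_wrt E (majority_vote E).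

End Defs.

(* Main.v *)
Require Import Defs.
From mathcomp Require Import all_boot all_order all_algebra.
From mathcomp Require Import zify ring lra.
Import Order.TTheory GRing.Theory Num.Theory.
Local Open Scope ring_scope.

Lemma card_swap (n m : nat) (b : 'I_n -> 'I_m -> bool) :
  (\sum_(i < n) #|[set j | b i j]| = \sum_(j < m) #|[set i | b i j]|)%N.
Proof.
have H : forall (k : nat) (p : 'I_k -> bool),
    #|[set x | p x]| = (\sum_(x < k) (if p x then 1 else 0))%N.
  move=> k p; rewrite -sum1dep_card big_mkcond //.
rewrite (eq_bigr (fun i => \sum_(j < m) (if b i j then 1 else 0))%N);
  last by move=> i _; rewrite H.
rewrite exchange_big /=; apply: eq_bigr => j _; by rewrite H.
Qed.

Lemma sum_eq_le (k : nat) (d a : 'I_k -> nat) : (forall j, d j <= a j)%N ->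
  (\sum_(j < k) d j = \sum_(j < k) a j)%N <-> (forall j, d j = a j).
Proof.
move=> hle; split; last by move=> h; apply: eq_bigr => j _; exact: h.
move=> hs j; apply/eqP; rewrite eqn_leq hle /=; rewrite leqNgt; apply/negP => hlt.
move: hs; rewrite (bigD1 j) //= [X in _ = X](bigD1 j) //=.
have : (\sum_(i < k | i != j) d i <= \sum_(i < k | i != j) a i)%N
  by apply: leq_sum => i _.
move=> h1 h2; have := leq_add hlt h1; rewrite addSn h2 ltnn //.
Qed.

Theorem proposition2 (R : realFieldType) (m n : nat) (E : election m n)
  (hn : (0 < n)%N)
  (hden : 0 < Num.min (avl R E) (rev_avl R E)) :
  (cntr_agr R E = 1 <-> identity_election E) /\
  (cntr_agr R E = 0 <->
     (central E (fun _ => true) \/ central E (fun _ => false))).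
Proof.
set u := majority_vote E.
pose a j := #|approvers E j|.
pose c j := #|[set i | ~~ E i j]|.
have hac : forall j, (a j + c j = n)%N.
  move=> j; rewrite /a /c -[X in _ = X](card_ord n) -(cardsC (approvers E j)); congr (_ + _)%N.
  by apply: eq_card => i; rewrite !inE.
pose P := (\sum_(j < m) a j)%N.
pose Q := (\sum_(j < m) c j)%N.
pose d j := if (n <= 2 * a j)%N then c j else a j.
pose S := (\sum_(i < n) ham (E i) u)%N.
have hP : (\sum_(i < n) #|appr_set (E i)| = P)%N.
  by rewrite /appr_set card_swap.
have hQ : (\sum_(i < n) (m - #|appr_set (E i)|) = Q)%N.
  rewrite /Q -card_swap; apply: eq_bigr => i _.
  rewrite -[X in (X - _)%N](card_ord m) -(cardsC (appr_set (E i))) addKn.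
  by apply: eq_card => j; rewrite !inE.
have hS : S = (\sum_(j < m) d j)%N.
  rewrite /S /ham card_swap; apply: eq_bigr => j _.
  rewrite /d /u /majority_vote -/(a j); case: ifP => _.
    by apply: eq_card => i; rewrite !inE; case: (E i j).
  by apply: eq_card => i; rewrite !inE; case: (E i j).
have hn' : (n%:R : R) != 0 by rewrite pnatr_eq0 -lt0n.
have hmin : n%:R * Num.min (avl R E) (rev_avl R E) = (minn P Q)%:R.
  rewrite /avl /rev_avl hP hQ.
  have hinv : 0 < (n%:R : R)^-1 by rewrite invr_gt0 ltr0n.
  case: (leqP P Q) => h.
    rewrite min_l; last by rewrite ler_pM2r // ler_nat.
    by rewrite ?(minn_idPl h) mulrC divfK.
  rewrite min_r; last by rewrite ler_pM2r // ler_nat ltnW.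
  by rewrite ?(minn_idPr (ltnW h)) mulrC divfK.
have hM : 0 < (minn P Q)%:R :> R.
  by rewrite -hmin mulr_gt0 // ltr0n.
have hM0 : (minn P Q)%:R != 0 :> R by rewrite gt_eqF.
have hca : cntr_agr R E = 1 - S%:R / (minn P Q)%:R.
  by rewrite /cntr_agr /cntr_agr_wrt hmin.
split.
- rewrite hca; split.
  + move=> h.
    have hS0 : (S = 0)%N.
      have : S%:R / (minn P Q)%:R = 0 :> R by lra.
      by move/eqP; rewrite mulf_eq0 invr_eq0 (negbTE hM0) orbF pnatr_eq0 => /eqP.
    have hall : forall i j, E i j = u j.
      move=> i j; move: hS0; rewrite /S => /eqP; rewrite sum_nat_eq0 => /forallP/(_ i).
      rewrite /ham cards_eq0 => /eqP/setP/(_ j); rewrite !inE.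
      by move/negbFE/eqP.
    by move=> i i' j; rewrite !hall.
  + move=> hid.
    have hall : forall i j, E i j = u j.
      move=> i j; rewrite /u /majority_vote.
      case hE: (E i j).
        have -> : approvers E j = setT.
          by apply/setP => i'; rewrite !inE -(hid i i' j) hE.
        rewrite cardsT card_ord; lia.
      have -> : approvers E j = set0.
        by apply/setP => i'; rewrite !inE -(hid i i' j) hE.
      rewrite cards0; lia.
    have -> : S = 0%N.
      rewrite /S big1 // => i _; rewrite /ham; apply/eqP; rewrite cards_eq0.
      by apply/eqP/setP => j; rewrite !inE hall eqxx.
    by rewrite mul0r subr0.
- have hdP : forall j, (d j <= a j)%N.
    by move=> j; rewrite /d; case: ifP => h //; have := hac j; lia.
  have hdQ : forall j, (d j <= c j)%N.
    by move=> j; rewrite /d; case: ifP => h //; have := hac j; lia.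
  have SP : (S <= P)%N by rewrite hS; apply: leq_sum => j _.
  have SQ : (S <= Q)%N by rewrite hS; apply: leq_sum => j _.
  have cT : central E (fun _ => true) <-> (forall j, n <= 2 * a j)%N.
    split => h j; move: (h j); rewrite /a; congr (_ <= 2 * _)%N;
      by apply: eq_card => i; rewrite !inE; case: (E i j).
  have cF : central E (fun _ => false) <-> (forall j, n <= 2 * c j)%N.
    split => h j; move: (h j); rewrite /c; congr (_ <= 2 * _)%N;
      by apply: eq_card => i; rewrite !inE; case: (E i j).
  have e1 : S = P <-> (forall j, n <= 2 * c j)%N.
    rewrite hS sum_eq_le //; split => h j; move: (h j) (hac j); rewrite /d;
      case: ifP; lia.
  have e2 : S = Q <-> (forall j, n <= 2 * a j)%N.
    rewrite hS sum_eq_le //; split => h j; move: (h j) (hac j); rewrite /d;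
      case: ifP; lia.
  rewrite cT cF -e1 -e2 hca; split.
  + move=> h.
    have : S%:R / (minn P Q)%:R = 1 :> R by lra.
    move/(congr1 (fun x => x * (minn P Q)%:R)); rewrite mul1r divfK //.
    move/eqP; rewrite eqr_nat => /eqP; lia.
  + move=> h.
    have -> : S = minn P Q by lia.
    by rewrite divff // subrr.
Qed.
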